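(* Let $G=(V,E)$ be a connected hypergraph with at least two vertices. Then: (a) there exists at least one construction sequence; (b) if $G$ is a hypertree, then every construction sequence $(A_1,\ldots,A_m)$ satisfies $\big|\big(\bigcup_{i=1}^{\ell-1}A_i\big)\cap A_\ell\big|=1$ for all $2\le\ell\le m$; (c) if $G$ is not a hypertree, then every construction sequence $(A_1,\ldots,A_m)$ satisfies $\big|\big(\bigcup_{i=1}^{\ell-1}A_i\big)\cap A_\ell\big|\ge2$ for at least one $\ell$.
   Context: A hypergraph is a pair $G=(V,E)$ with $V$ finite and $E$ a set of subsets of $V$, each of cardinality at least 2. A walk is a sequence $(v_0,e_1,v_1,\ldots,e_k,v_k)$ with $v_i\in V$, $e_i\in E$ and $v_{i-1},v_i\in e_i$; $G$ is connected if any two vertices are joined by a walk. A cycle is a walk with $v_0,\ldots,v_{k-1}$ distinct, $v_k=v_0$, $e_1,\ldots,e_k$ distinct and $k\ge2$. A hypertree is a connected hypergraph with no cycles. For a connected hypergraph with $|V|\ge2$, a construction sequence is an ordering $(A_1,\ldots,A_m)$ of all of $E$ such that $\big(\bigcup_{i=1}^{\ell-1}A_i\big)\cap A_\ell\neq\emptyset$ for $2\le\ell\le m$. *)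

(* Defs.v *)
From mathcomp Require Import all_boot.
Set Implicit Arguments. Unset Strict Implicit. Unset Printing Implicit Defensive.

Definition hypergraph (V : finType) (E : {set {set V}}) : Prop :=
  forall e, e \in E -> 1 < #|e|.

(* A walk (v_0, e_1, v_1, ..., e_k, v_k) with v_0 = x, vertex list x :: p,
   edge list es (size p = size es = k). *)
Definition walk (V : finType) (E : {set {set V}}) (x : V) (p : seq V)
    (es : seq {set V}) : Prop :=
  size p = size es /\
  forall i, i < size es ->
    [/\ nth set0 es i \in E, nth x (x :: p) i \in nth set0 es i
      & nth x (x :: p) i.+1 \in nth set0 es i].

Definition connected (V : finType) (E : {set {set V}}) : Prop :=
  forall x y : V, exists p es, walk E x p es /\ last x p = y.

Definition is_cycle (V : finType) (E : {set {set V}}) (x : V) (p : seq V)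
    (es : seq {set V}) : Prop :=
  [/\ walk E x p es, uniq (belast x p), last x p = x, uniq es & 2 <= size es].

Definition hypertree (V : finType) (E : {set {set V}}) : Prop :=
  connected E /\ ~ (exists x p es, is_cycle E x p es).

Definition prefix_union (V : finType) (s : seq {set V}) (l : nat) : {set V} :=
  \bigcup_(A <- take l s) A.

(* A construction sequence: an ordering of all of E (0-indexed here) such that
   for every index l with 1 <= l < m, (A_0 u ... u A_{l-1}) meets A_l. *)
Definition construction_seq (V : finType) (E : {set {set V}})
    (s : seq {set V}) : Prop :=
  uniq s /\ (forall e, e \in s = (e \in E)) /\
  forall l, 1 <= l < size s -> prefix_union s l :&: nth set0 s l != set0.

(* Main.v *)
Require Import Defs.
From mathcomp Require Import all_boot zify.
Set Implicit Arguments. Unset Strict Implicit. Unset Printing Implicit Defensive.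

Section H.
Variable V : finType.

Lemma mem_bigcup_seq (x : V) (t : seq {set V}) :
  (x \in \bigcup_(A <- t) A) = has (fun A : {set V} => x \in A) t.
Proof.
elim: t => [|A t IH]; first by rewrite big_nil in_set0.
by rewrite big_cons in_setU IH.
Qed.

Lemma mem_pu (s : seq {set V}) l x :
  (x \in prefix_union s l) = has (fun A : {set V} => x \in A) (take l s).
Proof. by rewrite /prefix_union mem_bigcup_seq. Qed.

Definition ig (F : seq {set V}) : rel (V + {set V}) := fun a b =>
  match a, b with
  | inl x, inr e => (e \in F) && (x \in e)
  | inr e, inl x => (e \in F) && (x \in e)
  | _, _ => false end.

Lemma ig_sym F : symmetric (ig F).
Proof. by case=> [x|e] [y|f]. Qed.

Lemma ig_mono (F F' : seq {set V}) a b : {subset F <= F'} ->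
  connect (ig F) a b -> connect (ig F') a b.
Proof.
move=> sub; apply: connect_sub => {a b} [[x|e] [y|f]] //= /andP[h1 h2];
  by apply: connect1; rewrite /= (sub _ h1) h2.
Qed.

Lemma ig_step F (e : {set V}) u v : e \in F -> u \in e -> v \in e ->
  connect (ig F) (inl u) (inl v).
Proof.
move=> eF ue ve; apply: (connect_trans (y := inr e)); apply: connect1;
  by rewrite /= eF ?ue ?ve.
Qed.

Lemma cs_connect (E : {set {set V}}) s : construction_seq E s ->
  forall l, 1 <= l <= size s -> forall u v,
  u \in prefix_union s l -> v \in prefix_union s l ->
  connect (ig (take l s)) (inl u) (inl v).
Proof.
case=> _ [_ cs]; elim=> [//|l IH] /andP[_ ls] u v.
case: l IH ls => [|l] IH ls.
  clear IH; case: s cs ls => [//|A s] _ _; rewrite !mem_pu /= take0 /= !orbF => hu hv.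
  by apply: (@ig_step _ A); rewrite ?inE.
have ls' : l.+1 < size s by [].
have [w] : exists w, w \in prefix_union s l.+1 :&: nth set0 s l.+1.
  by apply/set0Pn; apply: cs; rewrite ls' andbT.
rewrite inE => /andP[wp wA].
have key : forall z, z \in prefix_union s l.+2 ->
    connect (ig (take l.+2 s)) (inl z) (inl w).
  move=> z; rewrite mem_pu (take_nth set0 ls') has_rcons -mem_pu => /orP[zA|zp].
    by apply: (@ig_step _ (nth set0 s l.+1)); rewrite // mem_rcons inE eqxx.
  apply: (@ig_mono (take l.+1 s)); first by move=> a ha; rewrite mem_rcons inE ha orbT.
  by apply: IH => //; apply/andP; split => //; apply: ltnW.
move=> hu hv; apply: (connect_trans (key _ hu)).
by rewrite (sym_connect_sym (ig_sym _)) key.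
Qed.


Lemma path_walk F : forall n q x y, size q <= n ->
  path (ig F) (inl x) q -> uniq (inl x :: q) -> last (inl x) q = inl y ->
  exists p es, [/\ size p = size es,
    (forall i, i < size es -> [/\ nth set0 es i \in F,
        nth x (x :: p) i \in nth set0 es i & nth x (x :: p) i.+1 \in nth set0 es i]),
    last x p = y, uniq (x :: p) & uniq es] /\
   ({subset p <= [pred z | inl z \in q]} /\ {subset es <= [pred e | inr e \in q]}).
Proof.
elim=> [|n IH] q x y.
  rewrite leqn0 => /nilP -> _ _ [<-]; exists [::], [::]; split => //.
case: q => [|[a|e] [|[z|f] q]] //.
- move=> _ _ _ [<-]; exists [::], [::]; split => //.
move=> /= sz /andP[/andP[eF xe] /andP[/andP[_ ze] pq]] /andP[xq /andP[eq uq]] lq.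
have [p [es [[h1 h2 h3 h4 h5] [s1 s2]]]] := IH q z y (ltnW sz) pq uq lq.
exists (z :: p), (e :: es); split; last split.
- split => //=.
  + by rewrite h1.
  + case=> [|i] /=; first by rewrite eF xe ze.
    rewrite ltnS => hi; have [a1 a2 a3] := h2 i hi.
    have hp : i < size p by rewrite h1.
    rewrite (@set_nth_default _ (z::p) z x i) ?(@set_nth_default _ p z x i) //.
    by rewrite /= ltnW.
  + rewrite -/(uniq (z :: p)) h4 andbT; apply/negP => /orP[/eqP xz|/s1 /= xp].
      by move: xq; rewrite !inE xz eqxx !orbT.
    have xp' : inl x \in q := xp.
    by move: xq; rewrite !in_cons xp' !orbT.
  + rewrite h5 andbT; apply/negP => /s2 /= eq'.
    have eq'' : inr e \in q := eq'.
    by move: eq; rewrite in_cons eq'' orbT.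
- move=> w; rewrite inE => /orP[/eqP->|/s1 h]; rewrite inE !in_cons ?eqxx ?orbT //.
  by have -> : inl w \in q := h; rewrite !orbT.
- move=> w; rewrite inE => /orP[/eqP->|/s2 h]; rewrite inE !in_cons ?eqxx ?orbT //.
  by have -> : inr w \in q := h; rewrite !orbT.
- by move=> _ /andP[_ /andP[]].
Qed.


Lemma nth_notin_take (s : seq {set V}) l : uniq s -> l < size s ->
  nth set0 s l \notin take l s.
Proof.
move=> us ls; move: us; rewrite -{1}(cat_take_drop l s) cat_uniq (drop_nth set0 ls).
by case/and3P => _ /=; rewrite negb_or => /andP[].
Qed.

Lemma part_b (E : {set {set V}}) s : hypertree E -> construction_seq E s ->
  forall l, 1 <= l < size s -> #|prefix_union s l :&: nth set0 s l| = 1.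
Proof.
move=> [_ nocyc] cs l hl.
have ne := cs.2.2 l hl.
apply/eqP; rewrite eqn_leq card_gt0 ne andbT leqNgt; apply/negP => /card_gt1P [u [v [hu hv uv]]].
move: hu hv; rewrite !inE => /andP[up uA] /andP[vp vA].
have hl' : 1 <= l <= size s by case/andP: hl => -> /ltnW.
have := cs_connect cs hl' up vp.
case/connectP => q pq lq; move: lq.
case: (shortenP pq) => q' pq' uq' _ lq.
have [p [es [[h1 h2 h3 h4 h5] [_ _]]]] := path_walk (leqnn (size q')) pq' uq' (esym lq).
have ls : l < size s by case/andP: hl.
set A := nth set0 s l in uA vA ne.
have inE' : forall e, e \in take l s -> e \in E.
  by move=> e /mem_take; rewrite cs.2.1.
have Anot : A \notin es.
  apply/negP => Aes; have hi : index A es < size es by rewrite index_mem.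
  have [a1 _ _] := h2 _ hi; rewrite nth_index // in a1.
  by move: (nth_notin_take cs.1 ls); rewrite a1.
have hp : size es = size p by [].
have nlast : nth u (u :: p) (size p) = last u p by exact: (nth_last u (u :: p)).
apply: nocyc; exists u, (rcons p u), (rcons es A); split.
- split; first by rewrite !size_rcons h1.
  move=> i; rewrite size_rcons ltnS leq_eqVlt => /orP[/eqP ->|hi].
  + rewrite nth_rcons ltnn eqxx -rcons_cons !nth_rcons /= hp ltnSn ltnn eqxx nlast h3.
    by rewrite uA vA -cs.2.1 mem_nth.
  + have [a1 a2 a3] := h2 _ hi.
    rewrite nth_rcons hi -rcons_cons !nth_rcons /= !ltnS -hp (ltnW hi) hi.
    by rewrite inE' // a2 a3.
- by rewrite belast_rcons.
- by rewrite last_rcons.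
- by rewrite rcons_uniq Anot h5.
- rewrite size_rcons ltnS lt0n; apply/negP => /eqP es0.
  by move: h1 h3 uv; rewrite es0 => /size0nil -> /= ->; rewrite eqxx.
Qed.


Lemma part_c (E : {set {set V}}) s x p es : is_cycle E x p es -> construction_seq E s ->
  exists l, 1 <= l < size s /\ 2 <= #|prefix_union s l :&: nth set0 s l|.
Proof.
case=> [[h1 h2] ub lx ues k2] [us [ms _]].
have k0 : 0 < size es by apply: leq_trans k2.
pose j0 : 'I_(size es) := Ordinal k0.
case: (@arg_maxnP _ j0 xpredT (fun j : 'I_(size es) => index (nth set0 es j) s) isT)
  => [[j hj]] _ jmax.
have jmax' : forall i, i < size es -> index (nth set0 es i) s <= index (nth set0 es j) s.
  by move=> i hi; exact: (jmax (Ordinal hi)).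
have inS : forall i, i < size es -> nth set0 es i \in s.
  by move=> i hi; rewrite ms; case: (h2 i hi).
set ej := nth set0 es j.
have ejE : ej \in s by apply: inS.
set l := index ej s.
have ls : l < size s by rewrite index_mem.
have nl : nth set0 s l = ej by rewrite nth_index.
have other : forall i, i < size es -> i != j -> nth set0 es i \in take l s.
  move=> i hi ij.
  have eis := inS i hi.
  have lt : index (nth set0 es i) s < l.
    rewrite ltn_neqAle jmax' // andbT; apply/negP => /eqP eqi.
    have : nth set0 es i = ej by rewrite -(nth_index set0 eis) eqi nth_index.
    by move/eqP; rewrite nth_uniq // (negbTE ij).
  by rewrite -(nth_index set0 eis) -(nth_take set0 lt) mem_nth // size_take ls.
have hv : forall i, i < size es -> nth x (x :: p) i = nth x (belast x p) i.
  by move=> i hi; rewrite (lastI x p) nth_rcons size_belast h1 hi.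
have nk : nth x (x :: p) (size es) = x.
  by rewrite -h1 -[in RHS]lx; exact: (nth_last x (x :: p)).
set a := nth x (x :: p) j; set b := nth x (x :: p) j.+1.
have [_ aj bj] := h2 j hj.
have inpre : forall z i, i < size es -> i != j -> z \in nth set0 es i ->
    z \in prefix_union s l.
  by move=> z i hi ij zi; rewrite mem_pu; apply/hasP; exists (nth set0 es i) => //; apply: other.
have ap : a \in prefix_union s l.
  case: (posnP j) => [jz|jpos].
    have hk : (size es).-1 < size es by rewrite prednK.
    apply: (@inpre _ (size es).-1) => //.
      by rewrite jz -lt0n -ltnS prednK.
    have [_ _ h] := h2 _ hk; by rewrite prednK // nk /a jz in h *.
  have hj' : j.-1 < size es by exact: (leq_ltn_trans (leq_pred j) hj).
  apply: (@inpre _ j.-1) => //; first by lia.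
  by have [_ _ h] := h2 _ hj'; rewrite prednK in h.
have bp : b \in prefix_union s l.
  case: (ltnP j.+1 (size es)) => hj1.
    apply: (@inpre _ j.+1) => //; first by rewrite neq_ltn ltnSn orbT.
    by have [_ h _] := h2 _ hj1.
  have ej1 : j.+1 = size es by apply/eqP; rewrite eqn_leq hj1 hj.
  apply: (@inpre _ 0) => //.
    by rewrite eq_sym -lt0n -ltnS ej1.
  by rewrite /b ej1 nk; have [_ h _] := h2 _ k0.
have ab : a != b.
  case: (ltnP j.+1 (size es)) => hj1.
    by rewrite /a /b !hv // nth_uniq ?size_belast ?h1 //; lia.
  have ej1 : j.+1 = size es by lia.
  have jn0 : j != 0 by lia.
  rewrite /b ej1 nk -[x in _ != x]/(nth x (x::p) 0) /a !hv //.
  by rewrite nth_uniq ?size_belast ?h1.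
exists l; split.
  rewrite ls andbT lt0n; apply/negP => /eqP l0.
  case: (posnP j) => [jz|jp].
    by move: (other 1 k2); rewrite jz l0 take0 => /(_ isT).
  by move: (other 0 k0); rewrite eq_sym -lt0n jp l0 take0 => /(_ isT).
apply/card_gt1P; exists a, b; split => //; rewrite inE ?ap ?bp nl //.
Qed.


Lemma walkU (E : {set {set V}}) (s : seq {set V}) x p es :
  walk E x p es -> x \in \bigcup_(A <- s) A ->
  forall i, i <= size es -> (forall j, j < i -> nth set0 es j \in s) ->
  nth x (x :: p) i \in \bigcup_(A <- s) A.
Proof.
move=> [h1 h2] xU; elim=> [//|i IH] hi hb.
have [_ _ h] := h2 i hi.
rewrite mem_bigcup_seq; apply/hasP; exists (nth set0 es i) => //.
exact: hb.
Qed.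

Lemma part_a (E : {set {set V}}) : hypergraph E -> connected E ->
  exists s, construction_seq E s.
Proof.
move=> hg cn.
have step : forall n, n <= #|E| -> exists s, [/\ uniq s, {subset s <= E}, size s = n &
    forall l, 1 <= l < size s -> prefix_union s l :&: nth set0 s l != set0].
  elim=> [|n IH] hn; first by exists [::]; split => // l /andP[_]; rewrite ltn0.
  have [s [us sE sz cs]] := IH (ltnW hn).
  have : ~~ (E \subset s).
    apply/negP => sub; have := subset_leq_card sub; rewrite (card_uniqP us) sz.
    by rewrite leqNgt hn.
  case/subsetPn => e0 e0E e0s.
  have [e eE /andP[es hmeet]] : exists2 e, e \in E &
      (e \notin s) && ((s == [::]) || (\bigcup_(A <- s) A :&: e != set0)).
    case: s us sE sz cs e0s => [|A s'] us sE sz cs e0s.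
      by exists e0 => //; rewrite e0s.
    set s := A :: s' in us sE sz cs e0s *.
    have [xx xA] : exists x, x \in A.
      have := hg A (sE A (mem_head _ _)) => /ltnW; rewrite card_gt0 => /set0Pn.
      by case=> z hz; exists z.
    have [y ye0] : exists y, y \in e0.
      have := hg e0 e0E => /ltnW; rewrite card_gt0 => /set0Pn.
      by case=> z hz; exists z.
    have xU : xx \in \bigcup_(B <- s) B.
      by rewrite mem_bigcup_seq; apply/hasP; exists A => //; apply: mem_head.
    have [p [ws [wk lp]]] := cn xx y.
    have wk' := wk; case: wk' => [h1 h2].
    set i := find (fun e => e \notin s) ws.
    case: (ltnP i (size ws)) => hi.
      have [a1 a2 _] := h2 i hi.
      exists (nth set0 ws i) => //.
      rewrite (@nth_find _ set0 (fun e => e \notin s)) ?has_find //=.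
      apply/set0Pn; exists (nth xx (xx :: p) i); rewrite inE a2 andbT.
      apply: (walkU wk xU (ltnW hi)) => j hj.
      by have := before_find set0 hj => /= /negbFE.
    exists e0 => //; rewrite e0s /=; apply/set0Pn; exists y; rewrite inE ye0 andbT.
    have := walkU wk xU (leqnn (size ws)).
    have nl : nth xx (xx :: p) (size ws) = y.
      by rewrite -h1 -lp; exact: (nth_last xx (xx :: p)).
    rewrite nl; apply => j hj.
    by have := before_find set0 (leq_trans hj hi) => /= /negbFE.
  exists (rcons s e); split.
  - by rewrite rcons_uniq es us.
  - by move=> a; rewrite mem_rcons inE => /orP[/eqP ->|/sE].
  - by rewrite size_rcons sz.
  move=> l; rewrite size_rcons ltnS => /andP[l1]; rewrite leq_eqVlt; case/orP => [/eqP ls|hl].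
    subst l; rewrite /prefix_union -cats1 take_size_cat // nth_cat ltnn subnn /=.
    move: hmeet; case: (s =P [::]) => [s0|_] //=.
    by move: l1; rewrite s0.
  rewrite /prefix_union -cats1 take_cat hl nth_cat hl.
  by apply: cs; rewrite l1.
have [s [us sE sz cs]] := step _ (leqnn _).
exists s; split => //; split => // e.
have eqc : #|s| = #|E| by rewrite (card_uniqP us).
have sub : s \subset E by apply/subsetP.
by have := subset_cardP eqc sub => /(_ e).
Qed.

End H.

From Stdlib Require Import Classical.

Theorem proposition2p2 (V : finType) (E : {set {set V}}) :
  hypergraph E -> connected E -> 1 < #|V| ->
  [/\ exists s, construction_seq E s,
      hypertree E -> forall s, construction_seq E s ->
        forall l, 1 <= l < size s -> #|prefix_union s l :&: nth set0 s l| = 1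
    & ~ hypertree E -> forall s, construction_seq E s ->
        exists l, 1 <= l < size s /\ 2 <= #|prefix_union s l :&: nth set0 s l|].
Proof.
move=> hg cn _; split.
- exact: part_a.
- move=> ht s cs; exact: (part_b ht cs).
- move=> nht s cs.
  have [x [p [es cyc]]] : exists x p es, is_cycle E x p es.
    by apply: NNPP => nc; apply: nht; split.
  exact: (part_c cyc cs).
Qed.
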